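(* Let $G$ be a $2$-connected cubic graph endowed with a perfect-matching $4$-cover $\mathcal{P}=\{P_1,P_2,P_3,P_4\}$. (i) If $R$ is a $2$-edge-cut of $G$, then either both edges of $R$ are simply covered or both are doubly covered; moreover, they belong to the same members of $\mathcal{P}$ (either one or two). (ii) If $R$ is a $3$-edge-cut of $G$, then either exactly one or all three edges of $R$ are doubly covered; in the latter case there is $P_j\in\mathcal{P}$ with $R\subseteq P_j$.
   Context: Graphs are finite; loops and multiple edges are allowed. A perfect-matching $4$-cover of a cubic graph $G$ is a set of four perfect matchings $P_1,\dots,P_4$ of $G$ whose union is $E(G)$. An edge is simply covered if it belongs to exactly one $P_i$ and doubly covered if it belongs to exactly two. (In such a cover every vertex is incident with exactly one doubly covered edge and no edge is covered three or more times.) *)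

(* Defs.v *)
From mathcomp Require Import all_boot.
Set Implicit Arguments. Unset Strict Implicit. Unset Printing Implicit Defensive.

(* A finite multigraph (loops and parallel edges allowed): vertex type V,
   edge type E, and each edge e has endpoints (ends e).1 and (ends e).2;
   e is a loop iff the two endpoints coincide. *)
Section Graph.
Variables (V E : finType) (ends : E -> V * V).

Definition incident (v : V) (e : E) : bool :=
  ((ends e).1 == v) || ((ends e).2 == v).

Definition is_loop (e : E) : bool := (ends e).1 == (ends e).2.

(* degree: a loop contributes 2 *)
Definition degree (v : V) : nat :=
  #|[set e | (ends e).1 == v]| + #|[set e | (ends e).2 == v]|.

Definition cubic : Prop := forall v, degree v = 3.

Definition adj (u v : V) : bool :=
  [exists e, (ends e == (u, v)) || (ends e == (v, u))].

Definition connected_graph : Prop := forall u v, connect adj u v.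

Definition connected_minus (w : V) : Prop :=
  forall u v, u != w -> v != w ->
    connect (fun x y => [&& adj x y, x != w & y != w]) u v.

Definition two_connected : Prop :=
  2 < #|V| /\ connected_graph /\ forall w, connected_minus w.

Definition perfect_matching (M : {set E}) : Prop :=
  (forall e, e \in M -> ~~ is_loop e) /\
  (forall v, #|[set e in M | incident v e]| = 1).

Definition pm4_cover (P : 'I_4 -> {set E}) : Prop :=
  injective P /\ (forall i, perfect_matching (P i)) /\
  \bigcup_(i < 4) P i = [set: E].

Definition cov_count (P : 'I_4 -> {set E}) (e : E) : nat :=
  #|[set i | e \in P i]|.

Definition simply_covered P e : bool := cov_count P e == 1.
Definition doubly_covered P e : bool := cov_count P e == 2.

Definition edge_cut_of (X : {set V}) : {set E} :=
  [set e | ((ends e).1 \in X) != ((ends e).2 \in X)].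

Definition k_edge_cut (k : nat) (R : {set E}) : Prop :=
  exists X : {set V}, R = edge_cut_of X /\ #|R| = k.

End Graph.

(* Main.v *)
Require Import Defs.
From mathcomp Require Import all_boot zify.
Set Implicit Arguments. Unset Strict Implicit. Unset Printing Implicit Defensive.

Lemma sum_ind (T : finType) (A : {set T}) (p : pred T) :
  \sum_(x in A) (p x : nat) = #|[set x in A | p x]|.
Proof.
rewrite -sum1_card big_mkcond [RHS]big_mkcond /=; apply: eq_bigr => x _.
by rewrite !inE; case: (x \in A); case: (p x).
Qed.

Section H.
Variables (V E : finType) (ends : E -> V * V).

Lemma ends_count1 (M : {set E}) (X : {set V}) (g : E -> V) :
  \sum_(v in X) #|[set e in M | g e == v]| = \sum_(e in M) (g e \in X : nat).
Proof.
under eq_bigr => v _ do rewrite -(sum_ind M (fun e => g e == v)).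
rewrite exchange_big; apply: eq_bigr => e _.
rewrite (sum_ind X (fun v => g e == v)).
case: (boolP (g e \in X)) => h.
  have -> : [set v in X | g e == v] = [set g e].
    by apply/setP => v; rewrite !inE eq_sym; case: eqP => [->|]; rewrite ?h ?andbF ?andbT.
  by rewrite cards1.
apply/eqP; rewrite cards_eq0; apply/eqP/setP => v; rewrite !inE.
by case: eqP => [<-|]; rewrite ?(negbTE h) ?andbF.
Qed.

Lemma ends_count (M : {set E}) (X : {set V}) :
  \sum_(v in X) (#|[set e in M | (ends e).1 == v]| + #|[set e in M | (ends e).2 == v]|)
  = #|M :&: edge_cut_of ends X| + 2 * \sum_(e in M) (((ends e).1 \in X) && ((ends e).2 \in X) : nat).
Proof.
rewrite big_split /= !ends_count1 -big_split /= big_distrr /=.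
have -> : M :&: edge_cut_of ends X = [set e in M | ((ends e).1 \in X) != ((ends e).2 \in X)].
  by apply/setP => e; rewrite !inE.
rewrite -sum_ind -big_split /=; apply: eq_bigr => e _.
by case: ((ends e).1 \in X); case: ((ends e).2 \in X).
Qed.

Lemma vertex_split (M : {set E}) v :
  (forall e, e \in M -> ~~ is_loop ends e) ->
  #|[set e in M | (ends e).1 == v]| + #|[set e in M | (ends e).2 == v]|
  = #|[set e in M | incident ends v e]|.
Proof.
move=> nl.
rewrite -cardsUI.
have -> : [set e in M | (ends e).1 == v] :&: [set e in M | (ends e).2 == v] = set0.
  apply/setP => e; rewrite !inE.
  case hM: (e \in M) => //=; case: eqP => // h1; case: eqP => // h2.
  by move: (nl e hM); rewrite /is_loop h1 h2 eqxx.
rewrite cards0 addn0; apply: eq_card => e; rewrite !inE /incident.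
by case: (e \in M).
Qed.

End H.

Section H2.
Variables (V E : finType) (ends : E -> V * V) (P : 'I_4 -> {set E}).
Hypothesis cub : cubic ends.
Hypothesis pc : pm4_cover ends P.

Lemma noloop e : ~~ is_loop ends e.
Proof.
case: pc => _ [pm cv].
have : e \in \bigcup_(i < 4) P i by rewrite cv inE.
by case/bigcupP => i _ he; exact: (pm i).1 e he.
Qed.

Lemma cov_ge1 e : 0 < cov_count P e.
Proof.
case: pc => _ [pm cv].
have : e \in \bigcup_(i < 4) P i by rewrite cv inE.
by case/bigcupP => i _ he; apply/card_gt0P; exists i; rewrite inE.
Qed.

Lemma cov_sum (A : {set E}) :
  \sum_(x in A) cov_count P x = \sum_(i < 4) #|P i :&: A|.
Proof.
have -> : \sum_(x in A) cov_count P x = \sum_(x in A) \sum_(i < 4) (x \in P i : nat).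
  apply: eq_bigr => x _; rewrite /cov_count.
  have -> : [set i | x \in P i] = [set i in [set: 'I_4] | x \in P i].
    by apply/setP => i; rewrite !inE.
  rewrite -(sum_ind [set: 'I_4] (fun i => x \in P i)).
  by apply: eq_bigl => i; rewrite inE.
rewrite exchange_big; apply: eq_bigr => i _.
rewrite sum_ind; apply: eq_card => x; rewrite !inE andbC.
by [].
Qed.

Lemma cov_le2 e : cov_count P e <= 2.
Proof.
case: (pc) => _ [pm cv].
set v := (ends e).1.
set I := [set x | incident ends v x].
have hI : #|I| = 3.
  rewrite -(cub v) /degree.
  have := @vertex_split _ _ ends [set: E] v (fun e _ => noloop e).
  have -> : #|[set e0 in [set: E] | incident ends v e0]| = #|I|.
    by apply: eq_card => x; rewrite !inE.
  move=> <-; congr (_ + _); apply: eq_card => x; rewrite !inE //.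
have hs : \sum_(x in I) cov_count P x = 4.
  rewrite cov_sum.
  rewrite (eq_bigr (fun _ => 1)) ?sum1_card ?card_ord // => i _.
  rewrite -((pm i).2 v); apply: eq_card => x; rewrite !inE andbC //.
have eI : e \in I by rewrite inE /incident eqxx.
have : \sum_(x in I) cov_count P x = \sum_(x in I) (1 + (cov_count P x).-1).
  by apply: eq_bigr => x _; have := cov_ge1 x; lia.
rewrite big_split /= sum1_card hI hs (bigD1 e) //=.
lia.
Qed.

Lemma match_par (i : 'I_4) (X : {set V}) :
  exists k, #|X| = #|P i :&: edge_cut_of ends X| + 2 * k.
Proof.
case: (pc) => _ [pm cv].
exists (\sum_(e in P i) (((ends e).1 \in X) && ((ends e).2 \in X) : nat)).
rewrite -ends_count -sum1_card.
apply: eq_bigr => v _; rewrite vertex_split ?(pm i).2 // => e _; exact: noloop.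
Qed.

Lemma cub_par (X : {set V}) :
  exists k, 3 * #|X| = #|edge_cut_of ends X| + 2 * k.
Proof.
exists (\sum_(e in [set: E]) (((ends e).1 \in X) && ((ends e).2 \in X) : nat)).
have -> : edge_cut_of ends X = [set: E] :&: edge_cut_of ends X by rewrite setTI.
rewrite -ends_count mulnC -sum_nat_const.
apply: eq_bigr => v _; rewrite -(cub v) /degree.
by congr (_ + _); apply: eq_card => x; rewrite !inE.
Qed.

End H2.

Theorem lemma6p2 (V E : finType) (ends : E -> V * V) (P : 'I_4 -> {set E}) :
  cubic ends -> two_connected ends -> pm4_cover ends P ->
  (forall R : {set E}, k_edge_cut ends 2 R ->
     forall e f, e != f -> R = [set e; f] ->
       ((simply_covered P e && simply_covered P f) \/
        (doubly_covered P e && doubly_covered P f)) /\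
       (forall i, (e \in P i) = (f \in P i)))
  /\
  (forall R : {set E}, k_edge_cut ends 3 R ->
     (#|[set e in R | doubly_covered P e]| = 1 \/
      #|[set e in R | doubly_covered P e]| = 3) /\
     (#|[set e in R | doubly_covered P e]| = 3 -> exists j, R \subset P j)).
Proof.
move=> cub _ pc; split.
- move=> R [X [-> hR]] e f hef hRef.
  have hi : forall i, (e \in P i) = (f \in P i).
    move=> i.
    have [k hk] := match_par pc i X.
    have [k' hk'] := cub_par cub X.
    have hc : #|P i :&: edge_cut_of ends X| = (e \in P i) + (f \in P i).
      rewrite hRef.
      have -> : P i :&: [set e; f] = [set x in [set e; f] | x \in P i].
        by apply/setP => x; rewrite !inE andbC.
      by rewrite -sum_ind big_setU1 ?big_set1 //= inE.
    move: hc; case: (e \in P i); case: (f \in P i) => //= hc; lia.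
  split => //.
  have ce : cov_count P e = cov_count P f.
    by apply: eq_card => i; rewrite !inE hi.
  rewrite /simply_covered /doubly_covered -ce.
  have := cov_ge1 pc e; have := cov_le2 cub pc e.
  case: (cov_count P e) => [|[|[|n]]] //= _ _; [left|right] => //.
- move=> R [X [-> hR]].
  have hc : forall i, #|P i :&: edge_cut_of ends X| = 1 \/ #|P i :&: edge_cut_of ends X| = 3.
    move=> i; have [k hk] := match_par pc i X; have [k' hk'] := cub_par cub X.
    have : #|P i :&: edge_cut_of ends X| <= #|edge_cut_of ends X|.
      by apply: subset_leq_card; apply: subsetIr.
    lia.
  have hsum : \sum_(x in edge_cut_of ends X) cov_count P x =
     #|edge_cut_of ends X| + #|[set x in edge_cut_of ends X | doubly_covered P x]|.
    rewrite -sum1_card -sum_ind -big_split /=; apply: eq_bigr => x _.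
    rewrite /doubly_covered; have := cov_ge1 pc x; have := cov_le2 cub pc x.
    by case: (cov_count P x) => [|[|[|n]]].
  have h4 : \sum_(i<4) #|P i :&: edge_cut_of ends X| =
      4 + 2 * \sum_(i<4) (#|P i :&: edge_cut_of ends X| == 3 : nat).
    rewrite big_distrr /= (eq_bigr (fun i => 1 + 2 * (#|P i :&: edge_cut_of ends X| == 3 : nat))); last first.
      by move=> i _; case: (hc i) => ->.
    by rewrite big_split /= big_const_ord.
  rewrite cov_sum h4 hR in hsum.
  have hd : #|[set x in edge_cut_of ends X | doubly_covered P x]| <= 3.
    rewrite -hR; apply: subset_leq_card; apply/subsetP => x; rewrite inE => /andP[].
    by [].
  split; first lia.
  move=> hd3.
  case: (boolP [exists i, #|P i :&: edge_cut_of ends X| == 3]).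
    case/existsP => j /eqP hj; exists j.
    apply/setIidPr; apply/eqP; rewrite eqEcard subsetIr hj hR //.
  rewrite negb_exists => /forallP hn.
  rewrite big1 in hsum; first lia.
  by move=> i _; rewrite (negbTE (hn i)).
Qed.
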